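(* Let $X_1,X_2$ be locally compact Hausdorff spaces, $\mathcal{A}_i\subset\mathcal{C}_c(X_i)$ subalgebras, and $M_i,N_i$ uniform norms on $\mathcal{A}_i$ ($i=1,2$). If $M_1\preceq N_1$ and $M_2\preceq N_2$, then $M_1\otimes M_2\preceq N_1\otimes N_2$ on $\mathcal{A}_1\otimes\mathcal{A}_2$.
   Context: A norm $M$ on $\mathcal{A}\subset\mathcal{C}_c(X)$ is uniform if $\|\phi\|_\infty\le F\,M(\phi)$ for some constant $F$ and all $\phi$. For uniform norms on a subalgebra, $M\preceq N$ means there exist $D_1,D_2>0$ with $M(\phi_1)\le D_1N(\phi_1)$ and $M(\phi_1\phi_2)\le D_2N(\phi_1)N(\phi_2)$ for all $\phi_1,\phi_2$. $\mathcal{A}_1\otimes\mathcal{A}_2$ is the subalgebra of $\mathcal{C}_c(X_1\times X_2)$ of finite sums $\sum_i\phi_{1i}\otimes\phi_{2i}$, and $(M_1\otimes M_2)(\phi)=\inf\sum_iM_1(\phi_{1i})M_2(\phi_{2i})$ over all such representations of $\phi$ (projective tensor norm). *)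

(* Defs.v *)
From mathcomp Require Import all_boot all_order all_algebra.
From mathcomp Require Import all_classical all_reals all_analysis.
From mathcomp Require Import complex.
Import numFieldNormedType.Exports.
Set Implicit Arguments. Unset Strict Implicit. Unset Printing Implicit Defensive.
Import Order.TTheory GRing.Theory Num.Theory.
Local Open Scope classical_set_scope.
Local Open Scope ring_scope.

Definition C (R : rcfType) : numFieldType := R[i].

Definition cmod (R : rcfType) (z : C R) : R := ComplexField.Normc.normc (z : R[i]).

Definition support (R : realType) (X : topologicalType) (f : X -> C R) : set X :=
  closure [set x | f x != 0].

Definition Cc (R : realType) (X : topologicalType) : set (X -> C R) :=
  [set f | continuous f /\ compact (support f)].

Definition subalgebra_Cc (R : realType) (X : topologicalType)
    (A : set (X -> C R)) : Prop :=
  [/\ A `<=` @Cc R X,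
      A (fun _ => 0),
      (forall f g, A f -> A g -> A (fun x => f x + g x)),
      (forall (c : C R) f, A f -> A (fun x => c * f x)) &
      (forall f g, A f -> A g -> A (fun x => f x * g x))].

Definition is_norm_on (R : realType) (X : topologicalType)
    (A : set (X -> C R)) (M : (X -> C R) -> R) : Prop :=
  [/\ (forall f, A f -> 0 <= M f),
      (forall f, A f -> M f = 0 -> f = (fun _ => 0)),
      (forall f g, A f -> A g -> M (fun x => f x + g x) <= M f + M g) &
      (forall (c : C R) f, A f -> M (fun x => c * f x) = cmod c * M f)].

Definition uniform_norm (R : realType) (X : topologicalType)
    (A : set (X -> C R)) (M : (X -> C R) -> R) : Prop :=
  is_norm_on A M /\
  exists F : R, forall f, A f -> forall x, cmod (f x) <= F * M f.

Definition norm_preceq (R : realType) (X : topologicalType)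
    (A : set (X -> C R)) (M N : (X -> C R) -> R) : Prop :=
  exists D1 D2 : R, [/\ 0 < D1, 0 < D2,
    (forall f, A f -> M f <= D1 * N f) &
    (forall f g, A f -> A g -> M (fun x => f x * g x) <= D2 * N f * N g)].

Definition tensor_rep (R : realType) (X1 X2 : topologicalType)
    (A1 : set (X1 -> C R)) (A2 : set (X2 -> C R))
    (s : seq ((X1 -> C R) * (X2 -> C R))) (phi : X1 * X2 -> C R) : Prop :=
  (forall p, p \in s -> A1 p.1 /\ A2 p.2) /\
  phi = (fun z => \sum_(p <- s) p.1 z.1 * p.2 z.2).

Definition tensor_alg (R : realType) (X1 X2 : topologicalType)
    (A1 : set (X1 -> C R)) (A2 : set (X2 -> C R)) : set (X1 * X2 -> C R) :=
  [set phi | exists s, tensor_rep A1 A2 s phi].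

Definition proj_tensor_norm (R : realType) (X1 X2 : topologicalType)
    (A1 : set (X1 -> C R)) (A2 : set (X2 -> C R))
    (M1 : (X1 -> C R) -> R) (M2 : (X2 -> C R) -> R) (phi : X1 * X2 -> C R) : R :=
  inf [set r : R | exists s, tensor_rep A1 A2 s phi /\
                     r = \sum_(p <- s) M1 p.1 * M2 p.2].

(* Main.v *)
Require Import Defs.
From mathcomp Require Import all_boot all_order all_algebra.
From mathcomp Require Import all_classical all_reals all_analysis.
From mathcomp Require Import complex.
From mathcomp Require Import ring.
Import numFieldNormedType.Exports.
Import Order.TTheory GRing.Theory Num.Theory.
Local Open Scope classical_set_scope.
Local Open Scope ring_scope.

Lemma le_mul_inf (R : realType) (S : set R) (y c : R) :
  S !=set0 -> (forall a, S a -> 0 <= a) -> 0 <= c ->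
  (forall a, S a -> y <= c * a) -> y <= c * inf S.
Proof.
move=> [a0 Sa0] S0 c0 H.
have [c00|cn0] := eqVneq c 0.
  by rewrite c00 mul0r -(mul0r a0) -c00; apply: H.
have cp : 0 < c by rewrite lt_neqAle eq_sym cn0 c0.
rewrite -ler_pdivrMl //; apply: lb_le_inf; first by exists a0.
by move=> a Sa; rewrite ler_pdivrMl //; apply: H.
Qed.

Section T.
Variables (R : realType) (X1 X2 : topologicalType)
  (A1 : set (X1 -> C R)) (A2 : set (X2 -> C R))
  (M1 : (X1 -> C R) -> R) (M2 : (X2 -> C R) -> R)
  (hM1 : forall f, A1 f -> 0 <= M1 f) (hM2 : forall f, A2 f -> 0 <= M2 f).

Lemma sum_ge0 s phi : tensor_rep A1 A2 s phi -> 0 <= \sum_(p <- s) M1 p.1 * M2 p.2.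
Proof.
move=> [hs _]; rewrite big_seq; apply: sumr_ge0 => p /hs [a b].
by apply: mulr_ge0; auto.
Qed.

Lemma ptn_le s phi : tensor_rep A1 A2 s phi ->
  proj_tensor_norm A1 A2 M1 M2 phi <= \sum_(p <- s) M1 p.1 * M2 p.2.
Proof.
move=> hs; apply: ge_inf; last by exists s.
by exists 0 => r [t [ht ->]]; apply: sum_ge0 ht.
Qed.

Lemma ptn_ge_c (phi : X1 * X2 -> C R) (y c : R) : tensor_alg A1 A2 phi -> 0 <= c ->
  (forall s, tensor_rep A1 A2 s phi -> y <= c * \sum_(p <- s) M1 p.1 * M2 p.2) ->
  y <= c * proj_tensor_norm A1 A2 M1 M2 phi.
Proof.
move=> [s hs] c0 H; apply: le_mul_inf => //.
- by exists (\sum_(p <- s) M1 p.1 * M2 p.2); exists s.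
- by move=> r [t [ht ->]]; apply: sum_ge0 ht.
- by move=> r [t [ht ->]]; apply: H.
Qed.

Lemma ptn_ge0 phi : tensor_alg A1 A2 phi -> 0 <= proj_tensor_norm A1 A2 M1 M2 phi.
Proof.
move=> hphi; rewrite -[proj_tensor_norm _ _ _ _ _]mul1r.
by apply: ptn_ge_c => // s hs; rewrite mul1r; apply: sum_ge0 hs.
Qed.
End T.
Arguments sum_ge0 {R X1 X2 A1 A2 M1 M2} hM1 hM2 {s phi}.
Arguments ptn_le {R X1 X2 A1 A2 M1 M2} hM1 hM2 {s phi}.
Arguments ptn_ge_c {R X1 X2 A1 A2 M1 M2}.
Arguments ptn_ge0 {R X1 X2 A1 A2 M1 M2}.

Theorem lemma6p2 (R : realType) (X1 X2 : topologicalType)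
    (hX1 : hausdorff_space X1) (lcX1 : locally_compact [set: X1])
    (hX2 : hausdorff_space X2) (lcX2 : locally_compact [set: X2])
    (A1 : set (X1 -> C R)) (A2 : set (X2 -> C R))
    (hA1 : subalgebra_Cc A1) (hA2 : subalgebra_Cc A2)
    (M1 N1 : (X1 -> C R) -> R) (M2 N2 : (X2 -> C R) -> R)
    (uM1 : uniform_norm A1 M1) (uN1 : uniform_norm A1 N1)
    (uM2 : uniform_norm A2 M2) (uN2 : uniform_norm A2 N2)
    (h1 : norm_preceq A1 M1 N1) (h2 : norm_preceq A2 M2 N2) :
  norm_preceq (tensor_alg A1 A2)
    (proj_tensor_norm A1 A2 M1 M2) (proj_tensor_norm A1 A2 N1 N2).
Proof.
case: uM1 => [[hM1 _ _ _] _]; case: uM2 => [[hM2 _ _ _] _].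
case: uN1 => [[hN1 _ _ _] _]; case: uN2 => [[hN2 _ _ _] _].
case: hA1 => [_ _ _ _ mul1]; case: hA2 => [_ _ _ _ mul2].
case: h1 => [D1 [D2 [D1p D2p hM hMM]]].
case: h2 => [E1 [E2 [E1p E2p hE hEE]]].
exists (D1 * E1), (D2 * E2); split; try exact: mulr_gt0.
- move=> phi hphi; apply: (ptn_ge_c hN1 hN2) => //; first exact: ltW (mulr_gt0 D1p E1p).
  move=> s hs; apply: (le_trans (ptn_le hM1 hM2 hs)).
  rewrite big_distrr /= !big_seq; apply: ler_sum => p ps.
  case: hs => [hs _]; case: (hs p ps) => a b.
  rewrite mulrACA; apply: ler_pM; [exact: hM1 | exact: hM2 | exact: hM | exact: hE].
- move=> phi psi hphi hpsi.
  have c0 : 0 <= D2 * E2 by exact: ltW (mulr_gt0 D2p E2p).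
  apply: (ptn_ge_c hN1 hN2) => //; first by apply: mulr_ge0 => //; exact: (ptn_ge0 hN1 hN2).
  move=> t ht; rewrite mulrAC; apply: (ptn_ge_c hN1 hN2) => //.
    by apply: mulr_ge0 => //; exact: (sum_ge0 hN1 hN2 ht).
  move=> s hs.
  pose u := [seq ((fun x => p.1 x * q.1 x), (fun y => p.2 y * q.2 y)) | p <- s, q <- t].
  have hu : tensor_rep A1 A2 u (fun x => phi x * psi x).
    case: hs => hs1 hs2; case: ht => ht1 ht2; split.
      move=> r /allpairsP [[p q] [/= ps qt ->]] /=.
      case: (hs1 p ps) => a b; case: (ht1 q qt) => c d; split; [exact: mul1 | exact: mul2].
    apply: funext => z; rewrite hs2 ht2 /= big_allpairs_dep /= big_distrlr /=.
    apply: eq_bigr => p _; apply: eq_bigr => q _; ring.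
  apply: (le_trans (ptn_le hM1 hM2 hu)).
  rewrite big_allpairs_dep /= -mulrA (mulrC (\sum_(p <- t) _)) big_distrlr big_distrr /=.
  rewrite !big_seq; apply: ler_sum => p ps; rewrite big_distrr /= !big_seq.
  apply: ler_sum => q qt.
  case: hs => [hs _]; case: (hs p ps) => a b.
  case: ht => [ht _]; case: (ht q qt) => c d.
  have -> : D2 * E2 * (N1 p.1 * N2 p.2 * (N1 q.1 * N2 q.2)) =
            (D2 * N1 p.1 * N1 q.1) * (E2 * N2 p.2 * N2 q.2) by ring.
  apply: ler_pM; [apply: hM1; exact: mul1 | apply: hM2; exact: mul2 | exact: hMM | exact: hEE].
Qed.
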